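(* Let $\mu^+_1,\mu^-_1,\mu^+_2,\mu^-_2\in\Lambda$ satisfy $\alpha^\vee_i(\mu^+_1)=\alpha^\vee_i(\mu^+_2)$ and $\alpha^\vee_i(\mu^-_1)=\alpha^\vee_i(\mu^-_2)$ for all $1\le i\le n-1$. Then the assignment $$E_{i,r}\mapsto E_{i,r},\quad F_{i,r}\mapsto F_{i,r},\quad \varphi^\pm_{i,\pm s}\mapsto\varphi^\pm_{i,\pm s\mp\epsilon^\vee_i(\mu^\pm_1-\mu^\pm_2)}$$ gives rise to a $\mathbb{C}(v)$-algebra isomorphism $U_{\mu^+_1,\mu^-_1}(L\mathfrak{gl}_n)\xrightarrow{\sim}U_{\mu^+_2,\mu^-_2}(L\mathfrak{gl}_n)$.
   Context: Let $n\ge2$, $\Lambda=\bigoplus_{j=1}^n\mathbb{Z}\epsilon_j$, $\epsilon^\vee_j$ dual basis, $\alpha^\vee_i=\epsilon^\vee_i-\epsilon^\vee_{i+1}$. For $\nu^+,\nu^-\in\Lambda$ put $d^\pm_j:=\epsilon^\vee_j(\nu^\pm)$. $U_{\nu^+,\nu^-}(L\mathfrak{gl}_n)$ is the associative $\mathbb{C}(v)$-algebra generated by $E_{i,r},F_{i,r}$ ($1\le i<n$, $r\in\mathbb{Z}$), $\varphi^\pm_{i,\pm s}$ ($1\le i\le n$, $s\ge d^\pm_i$) and $(\varphi^\pm_{i,\pm d^\pm_i})^{-1}$, with generating series $E_i(z)=\sum_{r\in\mathbb{Z}}E_{i,r}z^{-r}$, $F_i(z)=\sum_rF_{i,r}z^{-r}$,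 $\varphi^\pm_i(z)=\sum_{r\ge d^\pm_i}\varphi^\pm_{i,\pm r}z^{\mp r}$, $\delta(z)=\sum_{r\in\mathbb{Z}}z^r$, and defining relations (for all $i,j$, $\epsilon,\epsilon'\in\{\pm\}$; relations involving rational functions are understood after multiplying by denominators; $[a,b]_x:=ab-xba$): (U0) $[\varphi^\epsilon_i(z),\varphi^{\epsilon'}_j(w)]=0$, $\varphi^\pm_{i,\pm d^\pm_i}(\varphi^\pm_{i,\pm d^\pm_i})^{-1}=(\varphi^\pm_{i,\pm d^\pm_i})^{-1}\varphi^\pm_{i,\pm d^\pm_i}=1$; (U1) $[E_i(z),F_j(w)]=(v-v^{-1})\delta_{ij}\delta(z/w)\big(\varphi^+_i(z)^{-1}\varphi^+_{i+1}(z)-\varphi^-_i(z)^{-1}\varphi^-_{i+1}(z)\big)$; (U2) $\varphi^\epsilon_i(z)E_j(w)=\big(\frac{z-w}{v^{-1}z-vw}\big)^{\delta_{i,j+1}}\big(\frac{z-w}{vz-v^{-1}w}\big)^{\delta_{i,j}}E_j(w)\varphi^\epsilon_i(z)$; (U3) $\varphi^\epsilon_i(z)F_j(w)=\big(\frac{v^{-1}z-vw}{z-w}\big)^{\delta_{i,j+1}}\big(\frac{vz-v^{-1}w}{z-w}\big)^{\delta_{i,j}}F_j(w)\varphi^\epsilon_i(z)$; (U4) $E_i(z)E_j(w)=\big(\frac{vz-v^{-1}w}{v^{-1}z-vw}\big)^{\delta_{ij}}\big(\frac{z-w}{vz-v^{-1}w}\big)^{\delta_{i,j-1}}\big(\frac{v^{-1}z-vw}{z-w}\big)^{\delta_{i,j+1}}E_j(w)E_i(z)$;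 (U5) $F_i(z)F_j(w)=\big(\frac{v^{-1}z-vw}{vz-v^{-1}w}\big)^{\delta_{ij}}\big(\frac{vz-v^{-1}w}{z-w}\big)^{\delta_{i,j-1}}\big(\frac{z-w}{v^{-1}z-vw}\big)^{\delta_{i,j+1}}F_j(w)F_i(z)$; (U6),(U7) for $|i-j|=1$: $[E_i(z_1),[E_i(z_2),E_j(w)]_v]_{v^{-1}}+[E_i(z_2),[E_i(z_1),E_j(w)]_v]_{v^{-1}}=0$, and the same with $F$ in place of $E$. *)

(* Defs.v *)
From HB Require Import structures.
From mathcomp Require Import all_boot all_order all_algebra.
From mathcomp Require Import fraction.
From mathcomp Require Import complex.
From mathcomp Require Import Rstruct.
Set Implicit Arguments. Unset Strict Implicit. Unset Printing Implicit Defensive.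
Import Order.TTheory GRing.Theory Num.Theory.
Local Open Scope ring_scope.

Definition CC : Type := complex.complex Rdefinitions.R.
Definition Cv : Type := {fraction {poly CC}}.
Definition vq : Cv := @FracField.tofrac _ ('X : {poly CC}).

(* Lambda = Z^n : a weight nu is its coordinate vector; eps_j^vee(nu) with j 1-based *)
Definition weight (n : nat) := 'I_n -> int.
Definition epsv (n : nat) (nu : weight n) (j : nat) : int :=
  if (insub j.-1 : option 'I_n) is Some k then nu k else 0.
Definition alphav (n : nat) (i : nat) (nu : weight n) : int :=
  epsv nu i - epsv nu i.+1.

(* A family of generators in an algebra A:
   gE i r = E_{i,r}, gF i r = F_{i,r},
   gP e i m = phi^{e}_{i,m} (e = true for '+', false for '-'; m is the actual
   subscript, i.e. m = s for phi^+_{i,s} and m = -s for phi^-_{i,-s}),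
   gPi e i = (phi^{e}_{i, e d^e_i})^{-1}. *)
Record gens (A : Type) := Gens {
  gE : nat -> int -> A;
  gF : nat -> int -> A;
  gP : bool -> nat -> int -> A;
  gPi : bool -> nat -> A }.

Section Rels.
Variables (n : nat) (nup num : weight n) (A : algType Cv) (g : gens A).

Definition sgn (e : bool) : int := if e then 1 else -1.
Definition dd (e : bool) (i : nat) : int := if e then epsv nup i else epsv num i.
(* phi^e_{i,m} is a generator iff e m >= d^e_i *)
Definition inrange (e : bool) (i : nat) (m : int) : bool := dd e i <= sgn e * m.
(* coefficient of z^{-k} in phi^e_i(z) *)
Definition phic (e : bool) (i : nat) (k : int) : A :=
  if inrange e i k then gP g e i k else 0.
(* t-th coefficient of phi^e_i(z), counted from the leading one *)
Definition coff (e : bool) (i : nat) (t : nat) : A := phic e i (sgn e * (dd e i + t%:Z)).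
(* first coefficients of the inverse series phi^e_i(z)^{-1} *)
Fixpoint ginv_seq (e : bool) (i : nat) (t : nat) : seq A :=
  match t with
  | 0 => [:: gPi g e i]
  | t'.+1 => rcons (ginv_seq e i t')
      (- (gPi g e i * \sum_(j < t'.+1) coff e i j.+1 * nth 0 (ginv_seq e i t') (t' - j)))
  end.
Definition ginv (e : bool) (i : nat) (t : nat) : A := nth 0 (ginv_seq e i t) t.
(* coefficient of z^{-k} in phi^e_i(z)^{-1} phi^e_{i+1}(z) *)
Definition Psi (e : bool) (i : nat) (k : int) : A :=
  match sgn e * k - dd e i.+1 + dd e i with
  | Posz N => \sum_(t < N.+1) ginv e i t * coff e i.+1 (N - t)
  | Negz _ => 0
  end.

(* relation  (a z + b w) L(z,w) = (c z + e w) R(z,w), where L, R have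
   coefficient of z^{-k} w^{-l} given by Lc k l, Rc k l *)
Definition linrel (a b c e : Cv) (Lc Rc : int -> int -> A) : Prop :=
  forall k l : int,
    a *: Lc (k + 1) l + b *: Lc k (l + 1) = c *: Rc (k + 1) l + e *: Rc k (l + 1).

(* linear forms  z - w, v z - v^{-1} w, v^{-1} z - v w  as coefficient pairs *)
Definition lf_zw : Cv * Cv := (1, -1).
Definition lf_vz : Cv * Cv := (vq, - vq^-1).
Definition lf_iz : Cv * Cv := (vq^-1, - vq).
Definition lf_one : Cv * Cv := (1, 0).

(* X(z) Y(w) = (num/den) Y(w) X(z), written den * (X Y) = num * (Y X) *)
Definition fracrel (nm dn : Cv * Cv) (Lc Rc : int -> int -> A) : Prop :=
  linrel dn.1 dn.2 nm.1 nm.2 Lc Rc.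

Definition qbr (x : Cv) (a b : A) : A := a * b - x *: (b * a).

Definition isE (i : nat) := (1 <= i <= n.-1)%N.
Definition isP (i : nat) := (1 <= i <= n)%N.

Definition rels : Prop :=
  (forall e e' i j k l, isP i -> isP j -> inrange e i k -> inrange e' j l ->
      gP g e i k * gP g e' j l = gP g e' j l * gP g e i k) /\
  (forall e i, isP i ->
      gP g e i (sgn e * dd e i) * gPi g e i = 1 /\
      gPi g e i * gP g e i (sgn e * dd e i) = 1) /\
  (forall i j r s, isE i -> isE j ->
      gE g i r * gF g j s - gF g j s * gE g i r =
      if i == j then (vq - vq^-1) *: (Psi true i (r + s) - Psi false i (r + s)) else 0) /\
  (forall e i j, isP i -> isE j ->
      fracrel (if i == j.+1 then lf_zw else if i == j then lf_zw else lf_one)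
              (if i == j.+1 then lf_iz else if i == j then lf_vz else lf_one)
              (fun k l => phic e i k * gE g j l) (fun k l => gE g j l * phic e i k)) /\
  (forall e i j, isP i -> isE j ->
      fracrel (if i == j.+1 then lf_iz else if i == j then lf_vz else lf_one)
              (if i == j.+1 then lf_zw else if i == j then lf_zw else lf_one)
              (fun k l => phic e i k * gF g j l) (fun k l => gF g j l * phic e i k)) /\
  (forall i j, isE i -> isE j ->
      fracrel (if i == j then lf_vz else if i.+1 == j then lf_zw
               else if i == j.+1 then lf_iz else lf_one)
              (if i == j then lf_iz else if i.+1 == j then lf_vz
               else if i == j.+1 then lf_zw else lf_one)
              (fun k l => gE g i k * gE g j l) (fun k l => gE g j l * gE g i k)) /\
  (forall i j, isE i -> isE j ->
      fracrel (if i == j then lf_iz else if i.+1 == j then lf_vz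
               else if i == j.+1 then lf_zw else lf_one)
              (if i == j then lf_vz else if i.+1 == j then lf_zw
               else if i == j.+1 then lf_iz else lf_one)
              (fun k l => gF g i k * gF g j l) (fun k l => gF g j l * gF g i k)) /\
  (forall i j r1 r2 s, isE i -> isE j -> (i == j.+1) || (j == i.+1) ->
      qbr vq^-1 (gE g i r1) (qbr vq (gE g i r2) (gE g j s)) +
      qbr vq^-1 (gE g i r2) (qbr vq (gE g i r1) (gE g j s)) = 0) /\
  (forall i j r1 r2 s, isE i -> isE j -> (i == j.+1) || (j == i.+1) ->
      qbr vq^-1 (gF g i r1) (qbr vq (gF g i r2) (gF g j s)) +
      qbr vq^-1 (gF g i r2) (qbr vq (gF g i r1) (gF g j s)) = 0).

End Rels.

Definition agree (n : nat) (nup num : weight n) (A B : algType Cv)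
    (f : A -> B) (g : gens A) (h : gens B) : Prop :=
  (forall i r, isE n i -> f (gE g i r) = gE h i r /\ f (gF g i r) = gF h i r) /\
  (forall e i m, isP n i -> inrange nup num e i m -> f (gP g e i m) = gP h e i m) /\
  (forall e i, isP n i -> f (gPi g e i) = gPi h e i).

(* (A, g) is a presentation of U_{nup,num}(L gl_n): the generators satisfy the
   defining relations and A is universal (initial) among C(v)-algebras with such
   a family of elements. *)
Definition presents (n : nat) (nup num : weight n) (A : algType Cv) (g : gens A) : Prop :=
  rels nup num g /\
  forall (B : algType Cv) (h : gens B), rels nup num h ->
    (exists f : {lrmorphism A -> B}, agree nup num f g h) /\
    (forall f1 f2 : {lrmorphism A -> B},
        agree nup num f1 g h -> agree nup num f2 g h -> f1 =1 f2).

(* Main.v *)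
Require Import Defs.
From HB Require Import structures.
From mathcomp Require Import all_boot all_order all_algebra.
From mathcomp Require Import zify.
Import GRing.Theory.
Local Open Scope ring_scope.

Section Shift.
Variables (n : nat) (nu1p nu1m nu2p nu2m : weight n).
Hypothesis Hp : forall i : nat, (1 <= i <= n.-1)%N -> alphav i nu1p = alphav i nu2p.
Hypothesis Hm : forall i : nat, (1 <= i <= n.-1)%N -> alphav i nu1m = alphav i nu2m.
Variables (A : algType Cv) (g : gens A).

Definition cc (e : bool) (i : nat) : int :=
  if e then epsv nu1p i - epsv nu2p i else epsv nu1m i - epsv nu2m i.
Definition shift (e : bool) (i : nat) (k : int) : int := k - sgn e * cc e i.
Definition hg : gens A :=
  Gens (gE g) (gF g) (fun e i m => gP g e i (shift e i m)) (gPi g).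

Lemma inrange_shift e i k :
  inrange nu1p nu1m e i k = inrange nu2p nu2m e i (shift e i k).
Proof.
rewrite /inrange /shift /dd /cc /sgn; case: e; apply/idP/idP; lia.
Qed.

Lemma phic_shift e i k :
  phic nu1p nu1m hg e i k = phic nu2p nu2m g e i (shift e i k).
Proof. by rewrite /phic inrange_shift. Qed.

Lemma coff_shift e i t :
  coff nu1p nu1m hg e i t = coff nu2p nu2m g e i t.
Proof.
rewrite /coff phic_shift; congr phic.
rewrite /shift /dd /cc /sgn; case: e; lia.
Qed.

Lemma ginv_seq_shift e i t :
  ginv_seq nu1p nu1m hg e i t = ginv_seq nu2p nu2m g e i t.
Proof.
elim: t => [//|t IH] /=.
rewrite IH; congr (rcons _ (- (_ * _))).
by apply: eq_bigr => j _; rewrite coff_shift.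
Qed.

Lemma Psi_shift e i k : isE n i ->
  Psi nu1p nu1m hg e i k = Psi nu2p nu2m g e i k.
Proof.
move=> Hi.
have Hp' := @Hp i Hi; have Hm' := @Hm i Hi.
rewrite /alphav in Hp' Hm'.
rewrite /Psi.
have -> : sgn e * k - dd nu1p nu1m e i.+1 + dd nu1p nu1m e i =
          sgn e * k - dd nu2p nu2m e i.+1 + dd nu2p nu2m e i.
  rewrite /dd; case: e; lia.
case: (sgn e * k - dd nu2p nu2m e i.+1 + dd nu2p nu2m e i) => // N.
apply: eq_bigr => t _.
by rewrite /ginv ginv_seq_shift coff_shift.
Qed.

Lemma shift1 e i k : shift e i (k + 1) = shift e i k + 1.
Proof. rewrite /shift; lia. Qed.

Lemma rels_shift : rels nu2p nu2m g -> rels nu1p nu1m hg.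
Proof.
move=> [H0 [H0' [H1 [H2 [H3 [H4 [H5 [H6 H7]]]]]]]].
split.
  move=> e e' i j k l Pi Pj; rewrite !inrange_shift => r1 r2 /=.
  exact: H0.
split.
  move=> e i Pi /=.
  have -> : shift e i (sgn e * dd nu1p nu1m e i) = sgn e * dd nu2p nu2m e i.
    rewrite /shift /dd /cc /sgn; case: e; lia.
  exact: H0'.
split.
  move=> i j r s Ei Ej /=; rewrite H1 //.
  by case: eqP => // ->; rewrite !Psi_shift.
split.
  move=> e i j Pi Ej; move: (H2 e i j Pi Ej); rewrite /fracrel /linrel => H k l.
  by rewrite /= !phic_shift shift1; apply: H.
split.
  move=> e i j Pi Ej; move: (H3 e i j Pi Ej); rewrite /fracrel /linrel => H k l.
  by rewrite /= !phic_shift shift1; apply: H.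
split; first exact: H4.
split; first exact: H5.
split; first exact: H6.
exact: H7.
Qed.

End Shift.

Theorem lemma3p2 (n : nat) (hn : (2 <= n)%N) (mu1p mu1m mu2p mu2m : weight n) :
  (forall i : nat, (1 <= i <= n.-1)%N -> alphav i mu1p = alphav i mu2p) ->
  (forall i : nat, (1 <= i <= n.-1)%N -> alphav i mu1m = alphav i mu2m) ->
  forall (A1 : algType Cv) (g1 : gens A1) (A2 : algType Cv) (g2 : gens A2),
    presents mu1p mu1m g1 -> presents mu2p mu2m g2 ->
    exists f : {lrmorphism A1 -> A2},
      bijective f /\
      (forall (i : nat) (r : int), isE n i ->
         f (gE g1 i r) = gE g2 i r /\ f (gF g1 i r) = gF g2 i r) /\
      (forall (i : nat) (s : int), isP n i -> inrange mu1p mu1m true i s ->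
         f (gP g1 true i s) = gP g2 true i (s - (epsv mu1p i - epsv mu2p i))) /\
      (forall (i : nat) (s : int), isP n i -> inrange mu1p mu1m false i (- s) ->
         f (gP g1 false i (- s)) = gP g2 false i (- s + (epsv mu1m i - epsv mu2m i))).
Proof.
move=> Hp Hm A1 g1 A2 g2 [R1 U1] [R2 U2].
have Hp' : forall i, (1 <= i <= n.-1)%N -> alphav i mu2p = alphav i mu1p.
  by move=> i Hi; rewrite Hp.
have Hm' : forall i, (1 <= i <= n.-1)%N -> alphav i mu2m = alphav i mu1m.
  by move=> i Hi; rewrite Hm.
have S12 := @rels_shift _ _ _ _ _ Hp Hm _ _ R2.
have S21 := @rels_shift _ _ _ _ _ Hp' Hm' _ _ R1.
have [[f [fE [fP fPi]]] _] := U1 _ _ S12.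
have [[f' [f'E [f'P f'Pi]]] _] := U2 _ _ S21.
have [_ uniq1] := U1 _ _ R1.
have [_ uniq2] := U2 _ _ R2.
have idag1 : agree mu1p mu1m (idfun : {lrmorphism A1 -> A1}) g1 g1 by [].
have idag2 : agree mu2p mu2m (idfun : {lrmorphism A2 -> A2}) g2 g2 by [].
exists f; split.
  exists f'.
    apply: (uniq1 (f' \o f) idfun) => //.
    split; [|split].
    - move=> i r Ei /=; have [-> ->] := fE i r Ei.
      by have [-> ->] := f'E i r Ei.
    - move=> e i m Pi Ir /=; rewrite fP //= f'P //=.
        rewrite /shift /cc /sgn; congr gP; case: e {Ir}; lia.
      by rewrite -inrange_shift.
    - by move=> e i Pi /=; rewrite fPi //= f'Pi.
  apply: (uniq2 (f \o f') idfun) => //.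
  split; [|split].
  - move=> i r Ei /=; have [-> ->] := f'E i r Ei.
    by have [-> ->] := fE i r Ei.
  - move=> e i m Pi Ir /=; rewrite f'P //= fP //=.
      rewrite /shift /cc /sgn; congr gP; case: e {Ir}; lia.
    by rewrite -inrange_shift.
  - by move=> e i Pi /=; rewrite f'Pi //= fPi.
split; first exact: fE.
split.
  move=> i s Pi Ir; rewrite fP //= /shift /sgn /cc; congr gP; lia.
move=> i s Pi Ir; rewrite fP //= /shift /sgn /cc; congr gP; lia.
Qed.
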